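(* Let $G$ be a finite group, let $H$ be a subgroup of $G$ with $[G:H]=r$, and let $D$ be a $(v,k,\lambda)$-difference set in $G$ with order $n=k-\lambda$. Suppose that some coset of $H$ contains exactly $s$ elements of $D$. Then \[ \left| s - \frac{k}{r} \right| \leq \sqrt{n}\,\frac{r-1}{r}. \]
   Context: For a finite group $G$ of order $v$ and a $k$-subset $D\subseteq G$ with $k\ge 1$, identify $D$ with the group ring element $\sum_{d\in D} d\in\mathbb{Z}G$, and for $a=\sum a_i g_i\in\mathbb{Z}G$ put $a^{(-1)}=\sum a_i g_i^{-1}$. $D$ is a $(v,k,\lambda)$-difference set in $G$ if $DD^{(-1)}=\lambda G+n\cdot 1$ in $\mathbb{Z}G$, where $n=k-\lambda$ (the order of $D$); equivalently every non-identity element of $G$ can be written as $d_1d_2^{-1}$ with $d_1,d_2\in D$ in exactly $\lambda$ ways. *)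

(* Defs.v *)
From mathcomp Require Import all_boot all_order all_algebra all_fingroup.
Set Implicit Arguments. Unset Strict Implicit. Unset Printing Implicit Defensive.
Import GroupScope.

Definition difference_set (gT : finGroupType) (G : {group gT}) (D : {set gT})
    (v k lambda : nat) : Prop :=
  [/\ D \subset G, #|G| = v, #|D| = k, (1 <= k)%N &
      forall g, g \in G -> g != 1 ->
        #|[set p in setX D D | p.1 * p.2^-1 == g]| = lambda].

(* Main.v *)
Require Import Defs.
From mathcomp Require Import all_boot all_order all_algebra all_fingroup.
From mathcomp Require Import ring lra.
Local Open Scope ring_scope.
Import Order.TTheory GRing.Theory Num.Theory.
Lemma my_sum_sq_expand (R : rcfType) (I : finType) (T : {set I}) (a : I -> R) (al be : R) :
  \sum_(i in T) (al * a i + be) ^+ 2 =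
  al ^+ 2 * \sum_(i in T) a i ^+ 2 + 2 * al * be * \sum_(i in T) a i + #|T|%:R * be ^+ 2.
Proof.
rewrite (eq_bigr (fun i => al ^+ 2 * a i ^+ 2 + 2 * al * be * a i + be ^+ 2)); last first.
  move=> i _; ring.
rewrite !big_split /= -!mulr_sumr sumr_const -mulr_natl; ring.
Qed.

Lemma my_sum_sq_ge (R : rcfType) (I : finType) (T : {set I}) (x : I -> R) c0 :
  c0 \in T -> x c0 ^+ 2 <= \sum_(i in T) x i ^+ 2.
Proof.
move=> hc; rewrite (bigD1 c0) //= lerDl; apply: sumr_ge0 => i _; exact: sqr_ge0.
Qed.

Lemma real_key (R : rcfType) (I : finType) (T : {set I}) (c0 : I) (a : I -> R) (r : nat) (k n S2 : R) :
  c0 \in T -> #|T| = r -> \sum_(i in T) a i = k -> \sum_(i in T) a i ^+ 2 = S2 ->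
  r%:R * S2 = k ^+ 2 + (r%:R - 1) * n ->
  `|a c0 - k / r%:R| <= Num.sqrt n * ((r%:R - 1) / r%:R).
Proof.
move=> hc hT hs hs2 hrel.
have r1 : (0 < r)%N by rewrite -hT card_gt0; apply/set0Pn; exists c0.
case: (ltngtP r 1) => [|hr|hr]; first by rewrite ltnNge r1.
- have h := @my_sum_sq_ge _ _ T (fun i => (r%:R - 1) * a i + (a c0 - k)) c0 hc.
  rewrite my_sum_sq_expand hs hs2 hT in h.
  set w := r%:R * a c0 - k.
  have rg : (2%:R <= r%:R :> R) by rewrite ler_nat.
  have hw : w ^+ 2 <= (r%:R - 1) ^+ 2 * n.
    have h2 : (r%:R - 1) * w ^+ 2 <= (r%:R - 1) * ((r%:R - 1) ^+ 2 * n).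
      have e : ((r%:R - 1) * a c0 + (a c0 - k)) = w by rewrite /w; ring.
      rewrite e in h.
      have hr0 : (0 < r%:R :> R) by lra.
      have e2 : r%:R * ((r%:R - 1) ^+ 2 * S2 + 2 * (r%:R - 1) * (a c0 - k) * k +
          r%:R * (a c0 - k) ^+ 2) = (r%:R - 1) ^+ 3 * n + w ^+ 2.
        have -> : r%:R * ((r%:R - 1) ^+ 2 * S2 + 2 * (r%:R - 1) * (a c0 - k) * k +
          r%:R * (a c0 - k) ^+ 2) = (r%:R - 1) ^+ 2 * (r%:R * S2) + r%:R * (2 * (r%:R - 1) * (a c0 - k) * k +
          r%:R * (a c0 - k) ^+ 2) by ring.
        rewrite hrel /w; ring.
      have h3 : r%:R * w ^+ 2 <= (r%:R - 1) ^+ 3 * n + w ^+ 2 by rewrite -e2 (ler_pM2l hr0).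
      rewrite -subr_ge0; rewrite -subr_ge0 in h3.
      have -> : (r%:R - 1) * ((r%:R - 1) ^+ 2 * n) - (r%:R - 1) * w ^+ 2
        = (r%:R - 1) ^+ 3 * n + w ^+ 2 - r%:R * w ^+ 2 by ring.
      exact: h3.
    have hr1 : (0 < r%:R - 1 :> R) by lra.
    by rewrite (ler_pM2l hr1) in h2.
  have hn : 0 <= n.
    have : 0 <= (r%:R - 1) ^+ 2 * n by apply: le_trans hw; exact: sqr_ge0.
    by rewrite pmulr_rge0 // exprn_gt0 //; lra.
  have hwa : `|w| <= Num.sqrt n * (r%:R - 1).
    rewrite -sqrtr_sqr -(@ger0_norm _ (r%:R - 1)); last by lra.
    rewrite -sqrtr_sqr -sqrtrM // mulrC.
    by rewrite ler_sqrt // mulr_ge0 // sqr_ge0.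
  have hr0 : (0 < r%:R :> R) by lra.
  have -> : a c0 - k / (r%:R : R) = w / (r%:R : R).
    by rewrite /w; field; rewrite pnatr_eq0 -lt0n.
  rewrite normrM (@ger0_norm _ r%:R^-1) ?invr_ge0; last by lra.
  rewrite mulrA ler_pM2r ?invr_gt0 //.
- rewrite hr in hT hrel *.
  have h := @my_sum_sq_ge _ _ T (fun i => 1 * a i + (- k)) c0 hc.
  rewrite my_sum_sq_expand hs hs2 hT in h.
  rewrite mul1r in hrel. rewrite hrel in h.
  have : (a c0 - k) ^+ 2 <= 0.
    have -> : (a c0 - k) ^+ 2 = (1 * a c0 + - k) ^+ 2 by ring.
    apply: le_trans h _; rewrite le_eqVlt; apply/orP; left; apply/eqP; ring.
  rewrite le_eqVlt ltNge sqr_ge0 orbF sqrf_eq0 subr_eq0 => /eqP ->.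
  by rewrite divr1 subrr normr0 subrr mul0r mulr0.
Qed.
Local Open Scope group_scope.
Lemma rco_key (gT : finGroupType) (H : {group gT}) (x y : gT) :
  (H :* x == H :* y) = (x * y^-1 \in H).
Proof.
rewrite -mem_rcoset; apply/eqP/idP => [e|/rcoset_eqP //].
by apply/rcoset_eqP.
Qed.

Lemma count_diff (gT : finGroupType) (G K : {group gT}) D v k lambda :
  K \subset G -> difference_set G D v k lambda ->
  addn #|[set p in setX D D | (p.1 * p.2^-1)%g \in K]| lambda = addn k (muln lambda #|K|).
Proof.
move=> sKG [sDG _ cD _ hl].
have e1 : #|[set p in setX D D | (p.1 * p.2^-1)%g \in K]| =
   \sum_(h in K) #|[set p in setX D D | (p.1 * p.2^-1)%g == h]|.
  rewrite -sum1_card (partition_big (fun p => (p.1 * p.2^-1)%g) (mem K)) //=; last first.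
    by move=> p; rewrite inE => /andP[].
  apply: eq_bigr => h hK; rewrite sum1dep_card; apply: eq_card => p.
  rewrite !inE; case: eqP => [->|]; by rewrite ?hK ?andbT ?andbF.
rewrite e1 (bigD1 1) //=.
have -> : #|[set p in setX D D | (p.1 * p.2^-1)%g == 1]| = k.
  rewrite -cD -(card_imset D (f := fun d => (d, d))); last by move=> x y [].
  apply: eq_card => [[x y]]; rewrite !inE /= -eq_mulgV1.
  apply/idP/imsetP => [/andP[/andP[xD yD] /eqP <-]|[d dD [-> ->]]].
    by exists x.
  by rewrite dD eqxx.
rewrite (eq_bigr (fun _ => lambda)); last first.
  by move=> h /andP[hne hK]; apply: hl => //; apply: (subsetP sKG).
rewrite sum_nat_const.
have -> : #|(fun i : gT => (i \in K) && (i != 1))| = #|K :\ 1|.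
  by apply: eq_card => i; rewrite !inE andbC.
rewrite [in RHS](cardsD1 1 K) group1 add1n mulnS.
by rewrite (mulnC lambda) -addnA (addnC lambda).
Qed.

Lemma coset_sums (gT : finGroupType) (G H : {group gT}) (D : {set gT}) :
  H \subset G -> D \subset G ->
  \sum_(C in rcosets H G) #|[set d in D | H :* d == C]| = #|D| /\
  \sum_(C in rcosets H G) (#|[set d in D | H :* d == C]| ^ 2)%N =
     #|[set p in setX D D | (p.1 * p.2^-1)%g \in H]|.
Proof.
move=> sHG sDG; split.
  rewrite -sum1_card (partition_big (fun d => H :* d) (mem (rcosets H G))) //=; last first.
    by move=> d dD; apply/rcosetsP; exists d => //; apply: (subsetP sDG).
  by apply: eq_bigr => C _; rewrite sum1dep_card.
rewrite -sum1_card (partition_big (fun p => H :* p.1) (mem (rcosets H G))) //=; last first.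
  move=> [x y]; rewrite !inE /= => /andP[/andP[xD _] _].
  by apply/rcosetsP; exists x => //; apply: (subsetP sDG).
apply: eq_bigr => C _; rewrite sum1dep_card -mulnn -cardsX; apply: eq_card => [[x y]].
rewrite !inE /= -rco_key.
case: (x \in D); case: (y \in D); rewrite /= ?andbF ?andbT //.
apply/andP/andP => [[/eqP -> /eqP ->]|[/eqP -> /eqP ->]]; by rewrite ?eqxx.
Qed.

Local Close Scope group_scope.
Local Open Scope ring_scope.
Lemma main_right (R : rcfType) (gT : finGroupType) (G H : {group gT})
    (D : {set gT}) (v k lambda : nat) (x : gT) :
  H \subset G -> difference_set G D v k lambda -> x \in G ->
  `|((#|D :&: (H :* x)|)%g%:R - k%:R / (#|G : H|)%g%:R : R)| <=
    Num.sqrt (k%:R - lambda%:R : R) * (((#|G : H|)%g%:R - 1) / (#|G : H|)%g%:R).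
Proof.
move=> sHG hd xG.
have [sDG vG cD k1 hl] := hd.
have [s1 s2] := coset_sums _ _ _ _ sHG sDG.
have cH := count_diff _ _ _ _ _ _ _ sHG hd.
have cG := count_diff _ _ _ _ _ _ _ (subxx G) hd.
have lag := Lagrange sHG.
have e0 : #|D :&: (H :* x)|%g = #|[set d in D | (H :* d == H :* x)%g]|.
  by apply: eq_card => d; rewrite !inE rco_key mem_rcoset.
have eG : #|[set p in setX D D | (p.1 * p.2^-1)%g \in G]| = (k * k)%N.
  rewrite -cD -cardsX; apply: eq_card => [[y z]]; rewrite !inE /=.
  apply/andP/idP => [[]//|/andP[yD zD]]; split; first by rewrite yD zD.
  by rewrite groupM ?groupV //; apply: (subsetP sDG).
rewrite e0.
apply: (@real_key R _ (rcosets H G) (H :* x)%g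
   (fun C => (#|[set d in D | (H :* d == C)%g]|%:R : R)) #|G : H|%g k%:R
   (k%:R - lambda%:R) (#|[set p in setX D D | (p.1 * p.2^-1)%g \in H]|%:R)).
- by apply/rcosetsP; exists x.
- by [].
- by rewrite -natr_sum s1 cD.
- by under eq_bigr do rewrite -natrX; rewrite -natr_sum s2.
have hS := congr1 (fun n => n%:R : R) cH.
have hG := congr1 (fun n => n%:R : R) cG.
rewrite /= eG in hG; rewrite /= in hS.
rewrite -lag in hG.
move: hS hG; rewrite !natrD !natrM.
set S2 := (#|[set p in setX D D | (p.1 * p.2^-1)%g \in H]|%:R : R); set m := (#|H|%:R : R); set r := (#|G : H|%g%:R : R).
move=> hS hG.
have eS : S2 = k%:R + lambda%:R * m - lambda%:R by rewrite -hS; ring.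
have ek : k%:R ^+ 2 = k%:R + lambda%:R * (m * r) - lambda%:R :> R.
  by rewrite -hG; ring.
by rewrite eS ek; ring.
Qed.

Theorem theorem1p1 (R : rcfType) (gT : finGroupType) (G H : {group gT})
    (D : {set gT}) (v k lambda r s : nat) :
  H \subset G -> (#|G : H|)%g = r ->
  difference_set G D v k lambda ->
  (exists2 x, x \in G &
     (#|D :&: (x *: H)|)%g = s \/ (#|D :&: (H :* x)|)%g = s) ->
  `|(s%:R - k%:R / r%:R : R)| <=
    Num.sqrt (k%:R - lambda%:R : R) * ((r%:R - 1) / r%:R).
Proof.
move=> sHG <- hd [x xG [hl|hr]]; last first.
  by rewrite -hr; exact: (main_right _ _ _ _ _ _ _ _ _ sHG hd xG).
have xiG : (x^-1 \in G)%g by rewrite groupV.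
have sH'G : (H :^ x^-1)%G \subset G by rewrite -(conjGid xiG) conjSg.
have ei : #|G : (H :^ x^-1)%G|%g = #|G : H|%g.
  by rewrite -{1}(conjGid xiG) indexJg.
have es : (x *: H = (H :^ x^-1) :* x)%g.
  apply/setP => y; rewrite mem_lcoset mem_rcoset mem_conjgV conjgE.
  by rewrite mulgKV.
rewrite -hl es -ei.
exact: (main_right _ _ _ _ _ _ _ _ _ sH'G hd xG).
Qed.
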